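(* For a group $G$ the following are equivalent: (1) $G$ is non-abelian; (2) there exist pairwise disjoint subsets $E_1,E_2,E_3,E_4,E_5$ of $G$ and elements $g_1,g_2\in G$ such that $g_1E_1=E_2=g_2^{-1}E_4$ and $E_3=g_1^{-1}E_5=g_2E_1$.
   Context: Here $gE=\{gx:x\in E\}$ denotes left translation in $G$. *)

(* Defs.v *)
Set Implicit Arguments.

Record Group := {
  carrier :> Type;
  gmul : carrier -> carrier -> carrier;
  gone : carrier;
  ginv : carrier -> carrier;
  gmulA : forall x y z, gmul x (gmul y z) = gmul (gmul x y) z;
  gmul1 : forall x, gmul gone x = x;
  gmulV : forall x, gmul (ginv x) x = gone
}.

Definition abelian (G : Group) : Prop := forall x y : G, gmul G x y = gmul G y x.

Definition ltrans {G : Group} (g : G) (E : G -> Prop) : G -> Prop :=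
  fun y => exists x, E x /\ y = gmul G g x.

Definition disjoint {G : Group} (A B : G -> Prop) : Prop :=
  forall x, ~ (A x /\ B x).

Definition nonempty {G : Group} (A : G -> Prop) : Prop := exists x, A x.

Definition pairwise_disjoint5 {G : Group} (E1 E2 E3 E4 E5 : G -> Prop) : Prop :=
  disjoint E1 E2 /\ disjoint E1 E3 /\ disjoint E1 E4 /\ disjoint E1 E5 /\
  disjoint E2 E3 /\ disjoint E2 E4 /\ disjoint E2 E5 /\
  disjoint E3 E4 /\ disjoint E3 E5 /\ disjoint E4 E5.

(* Main.v *)
Require Import Defs.
From Stdlib Require Import FunctionalExtensionality PropExtensionality Classical.

Section S.
Variable G : Group.
Local Notation "x * y" := (gmul G x y).
Local Notation "1" := (gone G).
Local Notation inv := (ginv G).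

Lemma mulV (x : G) : x * inv x = 1.
Proof.
  rewrite <- (gmul1 G (x * inv x)).
  rewrite <- (gmulV G (inv x)) at 1.
  rewrite <- gmulA, (gmulA G (inv x) x (inv x)), gmulV, gmul1. apply gmulV.
Qed.

Lemma mul1r (x : G) : x * 1 = x.
Proof. rewrite <- (gmulV G x), gmulA, mulV. apply gmul1. Qed.

Lemma lcancel (g x y : G) : g * x = g * y -> x = y.
Proof.
  intro H. rewrite <- (gmul1 G x), <- (gmul1 G y), <- (gmulV G g), <- !gmulA, H.
  reflexivity.
Qed.

Lemma rcancel (g x y : G) : x * g = y * g -> x = y.
Proof.
  intro H. rewrite <- (mul1r x), <- (mul1r y), <- (mulV g), !gmulA, H.
  reflexivity.
Qed.

Lemma ltransK (g : G) (E : G -> Prop) : ltrans (inv g) (ltrans g E) = E.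
Proof.
  apply functional_extensionality; intro y; apply propositional_extensionality.
  unfold ltrans; split.
  - intros [x [[z [Hz ->]] ->]]. rewrite gmulA, gmulV, gmul1. exact Hz.
  - intro Hy. exists (g * y). split. exists y; auto.
    rewrite gmulA, gmulV, gmul1. reflexivity.
Qed.

Lemma solve (b a c : G) : a = inv b * c -> c = b * a.
Proof. intros ->. rewrite gmulA, mulV, gmul1. reflexivity. Qed.

End S.

Theorem mainTheorem11 (G : Group) :
  ~ abelian G <->
  exists (E1 E2 E3 E4 E5 : G -> Prop) (g1 g2 : G),
    nonempty E1 /\ nonempty E2 /\ nonempty E3 /\ nonempty E4 /\ nonempty E5 /\
    pairwise_disjoint5 E1 E2 E3 E4 E5 /\
    ltrans g1 E1 = E2 /\ E2 = ltrans (ginv G g2) E4 /\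
    E3 = ltrans (ginv G g1) E5 /\ E3 = ltrans g2 E1.
Proof.
  split.
  - intro Hna.
    assert (Hex : exists a b : G, gmul G a b <> gmul G b a).
    { apply NNPP. intro Hn. apply Hna. intros x y.
      apply NNPP. intro Hxy. apply Hn. eauto. }
    destruct Hex as [a [b Hab]].
    set (E1 := fun y : G => y = gone G).
    set (E2 := ltrans a E1).
    set (E3 := ltrans b E1).
    set (E4 := ltrans b E2).
    set (E5 := ltrans a E3).
    assert (M1 : forall y, E1 y <-> y = gone G) by (intro; tauto).
    assert (M2 : forall y, E2 y <-> y = a).
    { intro y; unfold E2, E1, ltrans; split.
      - intros [x [-> ->]]. apply mul1r.
      - intros ->. exists (gone G); split; [reflexivity| symmetry; apply mul1r]. }
    assert (M3 : forall y, E3 y <-> y = b).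
    { intro y; unfold E3, E1, ltrans; split.
      - intros [x [-> ->]]. apply mul1r.
      - intros ->. exists (gone G); split; [reflexivity| symmetry; apply mul1r]. }
    assert (M4 : forall y, E4 y <-> y = gmul G b a).
    { intro y; unfold E4, ltrans; split.
      - intros [x [Hx ->]]. apply M2 in Hx. now subst.
      - intros ->. exists a; split; [apply M2; reflexivity| reflexivity]. }
    assert (M5 : forall y, E5 y <-> y = gmul G a b).
    { intro y; unfold E5, ltrans; split.
      - intros [x [Hx ->]]. apply M3 in Hx. now subst.
      - intros ->. exists b; split; [apply M3; reflexivity| reflexivity]. }
    assert (Ha1 : a <> gone G).
    { intro H; apply Hab; rewrite H, gmul1, mul1r; reflexivity. }
    assert (Hb1 : b <> gone G).
    { intro H; apply Hab; rewrite H, gmul1, mul1r; reflexivity. }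
    exists E1, E2, E3, E4, E5, a, b.
    split. exists (gone G); apply M1; reflexivity.
    split. exists a; apply M2; reflexivity.
    split. exists b; apply M3; reflexivity.
    split. exists (gmul G b a); apply M4; reflexivity.
    split. exists (gmul G a b); apply M5; reflexivity.
    split.
    + unfold pairwise_disjoint5, disjoint.
      repeat split; intros x [Hx Hy];
        first [apply M1 in Hx | apply M2 in Hx | apply M3 in Hx | apply M4 in Hx];
        first [apply M2 in Hy | apply M3 in Hy | apply M4 in Hy | apply M5 in Hy];
        rewrite Hx in Hy.
      * apply Ha1; auto.
      * apply Hb1; auto.
      * apply Hab. assert (a = ginv G b).
        { apply (lcancel _ b). rewrite mulV. auto. }
        rewrite H, mulV, gmulV. reflexivity.
      * apply Hab. assert (b = ginv G a).
        { apply (lcancel _ a). rewrite mulV. auto. }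
        rewrite H, mulV, gmulV. reflexivity.
      * apply Hab. rewrite Hy; reflexivity.
      * apply Hb1. apply (rcancel _ a). rewrite gmul1. auto.
      * apply Hb1. apply (lcancel _ a). rewrite mul1r. auto.
      * apply Ha1. apply (lcancel _ b). rewrite mul1r. auto.
      * apply Ha1. apply (rcancel _ b). rewrite gmul1. auto.
      * apply Hab. auto.
    + split. reflexivity.
      split. unfold E4. symmetry. apply ltransK.
      split. unfold E5. symmetry. apply ltransK.
      reflexivity.
  - intros [E1 [E2 [E3 [E4 [E5 [g1 [g2 H]]]]]]] Hab.
    destruct H as [[x Hx] [_ [_ [_ [_ [Hd [H12 [H24 [H35 H31]]]]]]]]].
    assert (Hy : E2 (gmul G g1 x)) by (rewrite <- H12; exists x; auto).
    rewrite H24 in Hy. destruct Hy as [y [Hy Hyeq]].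
    assert (Hz : E3 (gmul G g2 x)) by (rewrite H31; exists x; auto).
    rewrite H35 in Hz. destruct Hz as [z [Hz Hzeq]].
    apply solve in Hyeq. apply solve in Hzeq.
    destruct Hd as [_ [_ [_ [_ [_ [_ [_ [_ [_ D45]]]]]]]]].
    apply (D45 y). split; auto.
    rewrite Hyeq, gmulA, (Hab g2 g1), <- gmulA, <- Hzeq. exact Hz.
Qed.
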